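(* $\mathrm{rk}(|W\rangle^{\otimes 2})\le 8$, where $|W\rangle=|001\rangle+|010\rangle+|100\rangle$ is the three-qubit W state (one qubit each for parties $A,B,C$, normalization irrelevant) and $|W\rangle^{\otimes2}$ is viewed as a tripartite tensor in $(\mathbb{C}^2\otimes\mathbb{C}^2)_A\otimes(\mathbb{C}^2\otimes\mathbb{C}^2)_B\otimes(\mathbb{C}^2\otimes\mathbb{C}^2)_C$, each party holding its qubits from both copies.
   Context: The tensor rank $\mathrm{rk}(|\phi\rangle)$ of $|\phi\rangle\in H_A\otimes H_B\otimes H_C$ is the minimum $r$ such that $|\phi\rangle=\sum_{j=1}^r|a_j\rangle|b_j\rangle|c_j\rangle$ with $|a_j\rangle\in H_A,|b_j\rangle\in H_B,|c_j\rangle\in H_C$. *)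

(* Defs.v *)
From HB Require Import structures.
From mathcomp Require Import all_boot all_order all_algebra all_field.
Set Implicit Arguments. Unset Strict Implicit. Unset Printing Implicit Defensive.
Import GRing.Theory Num.Theory.
Local Open Scope ring_scope.

Definition tensor3 (IA IB IC : finType) := IA -> IB -> IC -> algC.

Definition decomposes_with (IA IB IC : finType) (phi : tensor3 IA IB IC) (r : nat) :=
  exists (a : 'I_r -> IA -> algC) (b : 'I_r -> IB -> algC) (c : 'I_r -> IC -> algC),
    forall i j k, phi i j k = \sum_(l < r) a l i * b l j * c l k.

Definition tensor_rank_le (IA IB IC : finType) (phi : tensor3 IA IB IC) (n : nat) :=
  exists r, (r <= n)%N /\ decomposes_with phi r.

Definition W_state : tensor3 'I_2 'I_2 'I_2 :=
  fun a b c => if ((a : nat) + b + c == 1)%N then 1 else 0.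

(* |W>^{(x)2}, party X holding qubits (x1, x2) from copies 1 and 2:
   coefficient of |a1 a2>_A |b1 b2>_B |c1 c2>_C is W(a1,b1,c1) * W(a2,b2,c2). *)
Definition W_tensor_square : tensor3 ('I_2 * 'I_2)%type ('I_2 * 'I_2)%type ('I_2 * 'I_2)%type :=
  fun a b c => W_state a.1 b.1 c.1 * W_state a.2 b.2 c.2.

(* Main.v *)
Require Import Defs.
From mathcomp Require Import all_boot all_order all_algebra all_field.
From mathcomp Require Import ring.
Import GRing.Theory Num.Theory.
Local Open Scope ring_scope.

Definition tabA : seq (seq int) :=
  [:: [:: 3; 6; 6; 0]; [:: 3; -2; -2; 0]; [:: 0; -1; -1; 0]; [:: 0; 0; 0; 12];
      [:: -3; 2; -6; 0]; [:: -3; -6; 2; 0]; [:: 0; 0; 1; 0]; [:: 0; 1; 0; 0]].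
Definition ptS : seq int := [:: 1; -1; 2; 0; 1; -1; 2; -2].
Definition ptT : seq int := [:: 1; -1; 2; 0; -1; 1; -2; 2].

Definition aa (l : 'I_8) (i : 'I_2 * 'I_2) : algC :=
  ((nth 0 (nth [::] tabA l) (2 * i.1 + i.2)%N)%:~R) / 12%:R.
Definition bb (l : 'I_8) (j : 'I_2 * 'I_2) : algC :=
  ((nth 0 ptS l)%:~R) ^+ j.1 * ((nth 0 ptT l)%:~R) ^+ j.2.

Lemma ord2 (x : 'I_2) : x = ord0 \/ x = ord_max.
Proof. case: x => [[|[|n]]] H; [left|right|]; try exact: val_inj. by []. Qed.

Theorem lemma1 : tensor_rank_le W_tensor_square 8.
Proof.
exists 8%N; split => //; exists aa, bb, bb.
move=> [i1 i2] [j1 j2] [k1 k2].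
have h12 : (12%:R : algC) != 0 by rewrite pnatr_eq0.
rewrite /W_tensor_square /W_state /aa /bb !big_ord_recl big_ord0 /=.
case: (ord2 i1) => ->; case: (ord2 i2) => ->; case: (ord2 j1) => ->;
case: (ord2 j2) => ->; case: (ord2 k1) => ->; case: (ord2 k2) => -> /=;
by field.
Qed.
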